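(* In the two-graph Moran process: (i) there is a pair of graph families $G_R,G_M$ (one pair on $n$ vertices for each $n$) such that, for constant relative fitness $r$, the fixation probability $f_{G_R,G_M}$ is $o(a^{-n})$ for some constant $a>1$; (ii) there is a pair of graph families $G_R',G_M'$ such that, for every constant $r>0$, the fixation probability $f_{G_R',G_M'}$ is at least $1-O(1/n)$.
   Context: Two-graph Moran process: vertex set $V=\{1,\dots,n\}$; resident graph $G_R=(V,E_R)$ and mutant graph $G_M=(V,E_M)$, strongly connected, with row-stochastic weight matrices $W_R=[w^R_{ij}]$, $W_M=[w^M_{ij}]$ ($w^R_{ij}>0$ iff $(i,j)\in E_R$, similarly for $M$). The state is the mutant set $S$; residents have fitness $1$, mutants fitness $r>0$. Each step a vertex $i$ is chosen with probability proportional to fitness; if $i$ is a mutant, it picks $j$ with probability $w^M_{ij}$ and $j$ becomes a mutant; if a resident, it picks $j$ with probability $w^R_{ij}$ and $j$ becomes a resident. Absorption at $S=\emptyset$ or $S=V$ (fixation). The fixation probability is the probability of fixation when starting with one mutant at a uniformly random vertex. Asymptotic notation is with respect to $n\to\infty$. *)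

(* Defs.v *)
From HB Require Import structures.
From mathcomp Require Import all_boot all_order all_algebra.
From mathcomp Require Import all_classical all_reals all_analysis.
Set Implicit Arguments. Unset Strict Implicit. Unset Printing Implicit Defensive.
Import Order.TTheory GRing.Theory Num.Theory numFieldNormedType.Exports.
Local Open Scope ring_scope.

(* A weighted directed graph on V = 'I_n is given by its weight matrix W:
   the edge set is {(i,j) | 0 < W i j}. *)
Definition edge_rel (R : realType) (n : nat) (W : 'M[R]_n) : rel 'I_n :=
  fun i j => 0 < W i j.

Definition valid_graph (R : realType) (n : nat) (W : 'M[R]_n) : Prop :=
  (forall i j, 0 <= W i j) /\
  (forall i, \sum_j W i j = 1) /\
  (forall i j, connect (edge_rel W) i j).

(* Fitness of vertex i in state S (S = set of mutants). *)
Definition fitness (R : realType) (n : nat) (r : R) (S : {set 'I_n}) (i : 'I_n) : R :=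
  if i \in S then r else 1.

Definition total_fitness (R : realType) (n : nat) (r : R) (S : {set 'I_n}) : R :=
  \sum_i fitness r S i.

(* Next state when i is chosen for reproduction and j is the target. *)
Definition next_state (n : nat) (S : {set 'I_n}) (i j : 'I_n) : {set 'I_n} :=
  if i \in S then j |: S else S :\ j.

Definition trans_prob (R : realType) (n : nat) (WR WM : 'M[R]_n) (r : R)
  (S T : {set 'I_n}) : R :=
  \sum_i \sum_j (fitness r S i / total_fitness r S) *
                (if i \in S then WM i j else WR i j) *
                (next_state S i j == T)%:R.

Fixpoint full_at (R : realType) (n : nat) (WR WM : 'M[R]_n) (r : R) (t : nat)
  (S : {set 'I_n}) : R :=
  match t with
  | 0 => (S == [set: 'I_n])%:R
  | t'.+1 => \sum_T trans_prob WR WM r S T * full_at WR WM r t' T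
  end.

(* Absorption probability at V (fixation), started from S: since V is absorbing,
   the probability of having fixated by time t is nondecreasing in t, and the
   fixation probability is its limit. *)
Definition fixation_from (R : realType) (n : nat) (WR WM : 'M[R]_n) (r : R)
  (S : {set 'I_n}) : R :=
  limn (fun t => full_at WR WM r t S).

Definition fixation_prob (R : realType) (n : nat) (WR WM : 'M[R]_n) (r : R) : R :=
  (n%:R)^-1 * \sum_i fixation_from WR WM r [set i].

(* Main.v *)
Require Import Defs.
From HB Require Import structures.
From mathcomp Require Import all_boot all_order all_algebra.
From mathcomp Require Import all_classical all_reals all_analysis.
From mathcomp Require Import ring lra.
Import Order.TTheory GRing.Theory Num.Theory numFieldNormedType.Exports.
Set Implicit Arguments. Unset Strict Implicit. Unset Printing Implicit Defensive.

Local Open Scope ring_scope.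

Definition cw (R : realType) n (WR WM : 'M[R]_n) (r : R) (S : {set 'I_n}) i j :=
  fitness r S i / total_fitness r S * (if i \in S then WM i j else WR i j).

Lemma GL (R : realType) n (WR WM : 'M[R]_n) (r : R) S (g : {set 'I_n} -> R) :
  \sum_T trans_prob WR WM r S T * g T =
  \sum_i \sum_j cw WR WM r S i j * g (next_state S i j).
Proof.
rewrite /trans_prob.
under eq_bigr do rewrite big_distrl /=.
rewrite exchange_big /=; apply: eq_bigr => i _.
under eq_bigr do rewrite big_distrl /=.
rewrite exchange_big /=; apply: eq_bigr => j _.
rewrite (bigD1 (next_state S i j)) //= eqxx mulr1 big1 ?addr0 //.
by move=> T /negbTE; rewrite eq_sym => ->; rewrite mulr0 mul0r.
Qed.

Lemma total_fitnessE (R : realType) n (r : R) (S : {set 'I_n}) :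
  total_fitness r S = r * #|S|%:R + #|~: S|%:R.
Proof.
rewrite /total_fitness (bigID (mem S)) /=.
rewrite (eq_bigr (fun _ => r)); last by move=> i Hi; rewrite /fitness Hi.
rewrite [X in _ + X](eq_bigr (fun _ => 1)); last first.
  by move=> i /negbTE Hi; rewrite /fitness Hi.
rewrite !sumr_const mulr_natr; congr (_ + _).
by apply/congr1/eq_card => i; rewrite !inE.
Qed.

Definition Wu (R : realType) n (a b : R) : 'M[R]_n :=
  \matrix_(i, j) (a * (i == j)%:R + b).

Lemma sumWu_in (R : realType) n (a b : R) (A : {set 'I_n}) i :
  \sum_(j in A) Wu n a b i j = (if i \in A then a else 0) + b * #|A|%:R.
Proof.
under eq_bigr do rewrite mxE.
rewrite big_split /= sumr_const mulr_natr; congr (_ + _).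
case: (boolP (i \in A)) => Hi.
  rewrite (bigD1 i) //= eqxx mulr1 big1 ?addr0 // => j /andP[_ Hj].
  by rewrite eq_sym (negbTE Hj) mulr0.
rewrite big1 // => j Hj; case: eqP => [Eij|]; last by rewrite mulr0.
by move: Hi; rewrite Eij Hj.
Qed.

Lemma sumWu (R : realType) n (a b : R) i :
  \sum_j Wu n a b i j = a + b * n%:R.
Proof.
have := sumWu_in a b [set: 'I_n] i.
rewrite inE cardsT card_ord => <-.
by apply: eq_bigl => j; rewrite inE.
Qed.

Lemma F_pos (R : realType) n (r : R) (S : {set 'I_n}) :
  0 < r -> (0 < n)%N -> 0 < total_fitness r S.
Proof.
move=> r0 n0; rewrite total_fitnessE.
have := cardsC S; rewrite card_ord => E.
case: (posnP #|S|) => [k0|kpos].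
  rewrite k0 mulr0 add0r ltr0n; by move: E; rewrite k0 add0n => ->.
by apply: ltr_wpDr => //; apply: mulr_gt0 => //; rewrite ltr0n.
Qed.

Lemma final_alg (R : realType) (r k m p x bM bR : R) :
  r * k + m != 0 -> x != 0 ->
  r / (r * k + m) * (p * (1 + (x - 1) * bM * m)) * k +
  1 / (r * k + m) * (p * (1 + (x^-1 - 1) * bR * k)) * m =
  p * (1 + k * m * ((x - 1) * r * bM + (x^-1 - 1) * bR) / (r * k + m)).
Proof. by move=> H H'; field; rewrite H H'. Qed.

Lemma GE (R : realType) n (aR bR aM bM r x : R) (S : {set 'I_n}) :
  0 < r -> (0 < n)%N -> x != 0 -> aR + bR * n%:R = 1 -> aM + bM * n%:R = 1 ->
  \sum_T trans_prob (Wu n aR bR) (Wu n aM bM) r S T * x ^+ #|T| =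
  x ^+ #|S| * (1 + #|S|%:R * #|~:S|%:R * ((x - 1) * r * bM + (x^-1 - 1) * bR)
                    / total_fitness r S).
Proof.
move=> r0 n0 x0 HR HM.
have Fp := F_pos S r0 n0.
have hkm : #|S|%:R + #|~:S|%:R = n%:R :> R.
  by rewrite -natrD cardsC card_ord.
rewrite GL (bigID (mem S)) /=.
set F := total_fitness r S.
set k := #|S|%:R; set m := #|~:S|%:R.
have E1 : forall i, i \in S -> \sum_j cw (Wu n aR bR) (Wu n aM bM) r S i j *
   x ^+ #|next_state S i j| = r / F * (x ^+ #|S| * (1 + (x - 1) * bM * m)).
  move=> i Hi.
  rewrite /cw /next_state /fitness Hi; under eq_bigr do rewrite -mulrA; rewrite -big_distrr /=; congr (_ * _).
  have -> : \sum_j Wu n aM bM i j * x ^+ #|j |: S| =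
            \sum_j Wu n aM bM i j * (x ^+ #|S| * (if j \in S then 1 else x)).
    apply: eq_bigr => j _; rewrite cardsU1; case: (j \in S) => /=.
      by rewrite add0n mulr1.
    by rewrite add1n exprSr.
  rewrite (bigID (mem S)) /=.
  rewrite (eq_bigr (fun j => Wu n aM bM i j * x ^+ #|S|)); last first.
    by move=> j ->; rewrite mulr1.
  rewrite [X in _ + X](eq_bigr (fun j => Wu n aM bM i j * (x ^+ #|S| * x))); last first.
    by move=> j /negbTE ->.
  rewrite -!big_distrl /= sumWu_in Hi.
  have -> : \sum_(j | j \notin S) Wu n aM bM i j = \sum_(j in ~: S) Wu n aM bM i j.
    by apply: eq_bigl => j; rewrite inE.
  rewrite sumWu_in inE Hi /= add0r.
  have -> : aM = 1 - bM * n%:R by lra.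

  rewrite -hkm -/k -/m.
  clearbody k m; move: (x ^+ _) => p; clear; ring.
have E2 : forall i, i \notin S -> \sum_j cw (Wu n aR bR) (Wu n aM bM) r S i j *
   x ^+ #|next_state S i j| = 1 / F * (x ^+ #|S| * (1 + (x^-1 - 1) * bR * k)).
  move=> i Hi.
  rewrite /cw /next_state /fitness (negbTE Hi); under eq_bigr do rewrite -mulrA; rewrite -big_distrr /=; congr (_ * _).
  have -> : \sum_j Wu n aR bR i j * x ^+ #|S :\ j| =
            \sum_j Wu n aR bR i j * (x ^+ #|S| * (if j \in S then x^-1 else 1)).
    apply: eq_bigr => j _; rewrite [in RHS](cardsD1 j S); case: (j \in S) => /=.
      by rewrite exprS [x * _]mulrC mulfK.
    by rewrite mulr1.
  rewrite (bigID (mem S)) /=.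
  rewrite (eq_bigr (fun j => Wu n aR bR i j * (x ^+ #|S| * x^-1))); last first.
    by move=> j ->.
  rewrite [X in _ + X](eq_bigr (fun j => Wu n aR bR i j * x ^+ #|S|)); last first.
    by move=> j /negbTE ->; rewrite mulr1.
  rewrite -!big_distrl /= sumWu_in (negbTE Hi) add0r.
  have -> : \sum_(j | j \notin S) Wu n aR bR i j = \sum_(j in ~: S) Wu n aR bR i j.
    by apply: eq_bigl => j; rewrite inE.
  rewrite sumWu_in inE Hi /=.
  have -> : aR = 1 - bR * n%:R by lra.
  rewrite -hkm -/k -/m.
  clearbody k m; move: (x ^+ _) => p; clear; ring.
rewrite (eq_bigr _ E1) (eq_bigr _ E2) !sumr_const.
have -> : #|[pred i | i \in S]| = #|S| by apply: eq_card.
have -> : #|[pred i | i \notin S]| = #|~: S| by apply: eq_card => i; rewrite !inE.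
have HF : F = r * k + m by rewrite /F total_fitnessE.
have Ek : forall y : R, y *+ #|S| = y * k by move=> y; rewrite mulr_natr.
have Em : forall y : R, y *+ #|~: S| = y * m by move=> y; rewrite mulr_natr.
rewrite Ek Em.
have F0 : F != 0 by rewrite gt_eqF.
clearbody k m F; move: (x ^+ _) => p.
by rewrite HF in F0 *; apply: final_alg.
Qed.

Section Chain.
Variables (R : realType) (n : nat) (WR WM : 'M[R]_n) (r : R).
Hypotheses (vR : valid_graph WR) (vM : valid_graph WM) (r0 : 0 < r) (n0 : (0 < n)%N).

Let P := trans_prob WR WM r.

Lemma cw_ge0 S i j : 0 <= cw WR WM r S i j.
Proof.
have Fp := F_pos S r0 n0.
rewrite /cw; apply: mulr_ge0; first apply: divr_ge0; last 1 first.
- by have [R0 _] := vR; have [M0 _] := vM; case: ifP.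
- by rewrite /fitness; case: ifP => _ //; exact: ltW.
- exact: ltW.
Qed.

Lemma P_ge0 S T : 0 <= P S T.
Proof.
apply: sumr_ge0 => i _; apply: sumr_ge0 => j _.
by apply: mulr_ge0; [exact: cw_ge0|exact: ler0n].
Qed.

Lemma sum_cw S : \sum_i \sum_j cw WR WM r S i j = 1.
Proof.
have Fp := F_pos S r0 n0.
rewrite -(divff (lt0r_neq0 Fp)); rewrite {2}/total_fitness mulr_suml.
apply: eq_bigr => i _; rewrite /cw -big_distrr /=.
have -> : \sum_j (if i \in S then WM i j else WR i j) = 1.
  by have [_ [R1 _]] := vR; have [_ [M1 _]] := vM; case: (i \in S).
by rewrite mulr1 mulrC.
Qed.

Lemma stoch S (c : R) : \sum_T P S T * c = c.
Proof.
rewrite (GL WR WM r S (fun _ => c)).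
by rewrite -[RHS]mul1r -(sum_cw S) mulr_suml; apply: eq_bigr => i _; rewrite mulr_suml.
Qed.

Lemma ABS (g : {set 'I_n} -> R) : \sum_T P [set: 'I_n]%SET T * g T = g [set: 'I_n]%SET.
Proof.
rewrite GL.
have -> : \sum_i \sum_j cw WR WM r [set: 'I_n]%SET i j * g (next_state [set: 'I_n]%SET i j) =
          \sum_i \sum_j cw WR WM r [set: 'I_n]%SET i j * g [set: 'I_n]%SET.
  apply: eq_bigr => i _; apply: eq_bigr => j _.
  by rewrite /next_state inE finset.setUT.
by rewrite -[RHS]mul1r -(sum_cw [set: 'I_n]%SET) mulr_suml; apply: eq_bigr => i _; rewrite mulr_suml.
Qed.

Lemma full_ge0 t S : 0 <= full_at WR WM r t S.
Proof.
elim: t S => [|t IH] S /=; first exact: ler0n.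
by apply: sumr_ge0 => T _; apply: mulr_ge0; [exact: P_ge0|exact: IH].
Qed.

Lemma full_le1 t S : full_at WR WM r t S <= 1.
Proof.
elim: t S => [|t IH] S /=; first by case: (S == _).
rewrite -[X in _ <= X](stoch S 1); apply: ler_sum => T _.
by apply: ler_wpM2l; [exact: P_ge0|exact: IH].
Qed.

Lemma full_V t : full_at WR WM r t [set: 'I_n]%SET = 1.
Proof.
elim: t => [|t IH] /=; first by rewrite eqxx.
by rewrite (ABS (full_at WR WM r t)) IH.
Qed.

Lemma full_mon t S : full_at WR WM r t S <= full_at WR WM r t.+1 S.
Proof.
elim: t S => [|t IH] S.
  rewrite [X in X <= _]/=; case: eqP => [->|_]; first by rewrite full_V.
  exact: full_ge0.
rewrite [X in X <= _]/= [X in _ <= X]/=; apply: ler_sum => T _.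
by apply: ler_wpM2l; [exact: P_ge0|exact: IH].
Qed.

Lemma full_nd S : {homo (fun t => full_at WR WM r t S) : a b / (a <= b)%N >-> a <= b}.
Proof.
move=> a b Hab; rewrite -(subnKC Hab); elim: (b - a)%N => [|d IH].
  by rewrite addn0.
by rewrite addnS; apply: le_trans IH (full_mon _ _).
Qed.

Lemma full_cvg S : cvgn (fun t => full_at WR WM r t S).
Proof.
apply/cvg_ex; eexists; apply: nondecreasing_cvgn; first exact: full_nd.
by exists 1 => _ [t _ <-]; exact: full_le1.
Qed.

Lemma fix_ge t S : full_at WR WM r t S <= fixation_from WR WM r S.
Proof. exact: (nondecreasing_cvgn_le (@full_nd S) (@full_cvg S) t). Qed.

Lemma UB (phi : {set 'I_n} -> R) :
  (forall S, 0 <= phi S) -> 1 <= phi [set: 'I_n]%SET ->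
  (forall S, \sum_T P S T * phi T <= phi S) ->
  forall S, fixation_from WR WM r S <= phi S.
Proof.
move=> p0 p1 sup S.
have H : forall t S, full_at WR WM r t S <= phi S.
  elim=> [|t IH] S' /=.
    by case: eqP => [->//|_]; exact: p0.
  apply: le_trans (sup S'); apply: ler_sum => T _.
  by apply: ler_wpM2l; [exact: P_ge0|exact: IH].
apply: limr_le; first exact: full_cvg.
by apply: nearW => t; exact: H.
Qed.

Lemma LB (phi psi : {set 'I_n} -> R) (lam : R) :
  (forall S, 0 <= phi S) -> 1 <= phi finset.set0 ->
  (forall S, \sum_T P S T * phi T <= phi S) ->
  (forall S, 0 <= psi S) -> (forall S, S != [set: 'I_n]%SET -> 1 <= psi S) ->
  0 <= lam ->
  (forall S, S != finset.set0 -> S != [set: 'I_n]%SET -> \sum_T P S T * psi T <= lam * psi S) ->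
  forall t S, 1 - full_at WR WM r t S <= phi S + lam ^+ t * psi S.
Proof.
move=> p0 p1 psup q0 q1 l0 qdec; elim=> [|t IH] S.
  rewrite /=; case: eqP => [->|/eqP SV]; first by rewrite subrr addr_ge0 ?mulr_ge0 ?exprn_ge0.
  by rewrite subr0 expr0 mul1r; apply: le_trans (q1 _ SV) _; rewrite lerDr.
have Hr : 0 <= phi S + lam ^+ t.+1 * psi S by rewrite addr_ge0 ?mulr_ge0 ?exprn_ge0.
case: (eqVneq S [set: 'I_n]%SET) => [->|SV]; first by rewrite full_V subrr addr_ge0 ?mulr_ge0 ?exprn_ge0.
case: (eqVneq S finset.set0) => [->|S0].
  have := full_ge0 t.+1 finset.set0.
  have : 0 <= lam ^+ t.+1 * psi finset.set0 by rewrite mulr_ge0 ?exprn_ge0.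
  move: p1; clear; move=> *; lra.
have -> : 1 - full_at WR WM r t.+1 S = \sum_T P S T * (1 - full_at WR WM r t T).
  rewrite /= -{1}(stoch S 1) -sumrB; apply: eq_bigr => T _.
  by rewrite mulrBr mulr1.
apply: le_trans (_ : \sum_T P S T * (phi T + lam ^+ t * psi T) <= _).
  by apply: ler_sum => T _; apply: ler_wpM2l; [exact: P_ge0|exact: IH].
under eq_bigr do rewrite mulrDr.
rewrite big_split /= exprSr -mulrA; apply: lerD; first exact: psup.
under eq_bigr do rewrite mulrCA.
rewrite -big_distrr /=; apply: ler_wpM2l; first exact: exprn_ge0.
exact: qdec.
Qed.

Lemma LBfix (phi psi : {set 'I_n} -> R) (lam : R) :
  (forall S, 0 <= phi S) -> 1 <= phi finset.set0 ->
  (forall S, \sum_T P S T * phi T <= phi S) ->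
  (forall S, 0 <= psi S) -> (forall S, S != [set: 'I_n]%SET -> 1 <= psi S) ->
  0 <= lam -> lam < 1 ->
  (forall S, S != finset.set0 -> S != [set: 'I_n]%SET -> \sum_T P S T * psi T <= lam * psi S) ->
  forall S d, 0 < d -> 1 - phi S - d <= fixation_from WR WM r S.
Proof.
move=> p0 p1 psup q0 q1 l0 l1 qdec S d d0.
have hl : `|lam| < 1 by rewrite ger0_norm.
have e0 : 0 < d / (psi S + 1) by rewrite divr_gt0 // ltr_wpDl.
have [N _ HN] := cvgr0_norm_le (fun t : nat => lam ^+ t) (cvg_expr hl) _ e0.
have := HN N (leqnn N); rewrite /= ger0_norm ?exprn_ge0 // => HlN.
apply: le_trans (fix_ge N S).
have := LB p0 p1 psup q0 q1 l0 qdec N S.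
have : lam ^+ N * psi S <= d.
  apply: le_trans (_ : d / (psi S + 1) * psi S <= d).
    by apply: ler_wpM2r.
  rewrite mulrAC ler_pdivrMr ?ltr_wpDl //.
  by rewrite ler_pM2l // lerDl.
move=> H1 H2; lra.
Qed.

End Chain.

Lemma valid_Wu (R : realType) n (a b : R) :
  ((0 < n)%N -> 0 <= a /\ 0 < b /\ a + b * n%:R = 1) -> valid_graph (Wu n a b).
Proof.
case: n a b => [|n] a b H; first by split; [case|split; case].
have [a0 [b0 ab]] := H isT.
have pos : forall i j : 'I_n.+1, 0 < Wu n.+1 a b i j.
  by move=> i j; rewrite mxE ltr_wpDl // mulr_ge0.
split; first by move=> i j; exact: ltW.
split; first by move=> i; rewrite sumWu.
by move=> i j; apply: connect1; rewrite /edge_rel pos.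
Qed.

Definition GR1 (R : realType) n : 'M[R]_n := Wu n 0 (n%:R^-1).
Definition GM1 (R : realType) n : 'M[R]_n := Wu n (1 - n%:R^-1) ((n%:R ^+ 2)^-1).
Definition GR2 (R : realType) n : 'M[R]_n := Wu n (1 - n%:R^-1) ((n%:R ^+ 2)^-1).
Definition GM2 (R : realType) n : 'M[R]_n := Wu n 0 (n%:R^-1).

Lemma ab1 (R : realType) n : (0 < n)%N -> 
  0 <= 1 - n%:R^-1 :> R /\ 0 < (n%:R ^+ 2)^-1 :> R /\ 1 - n%:R^-1 + (n%:R ^+ 2)^-1 * n%:R = 1 :> R.
Proof.
move=> n0; have N0 : 0 < n%:R :> R by rewrite ltr0n.
have N1 : 1 <= n%:R :> R by rewrite ler1n.
split; first by rewrite subr_ge0 invf_le1.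
split; first by rewrite invr_gt0 exprn_gt0.
have NN : n%:R != 0 :> R by rewrite gt_eqF.
move: NN; move: (n%:R) => N NN; field; exact: NN.
Qed.

Lemma ab2 (R : realType) n : (0 < n)%N ->
  0 <= 0 :> R /\ 0 < n%:R^-1 :> R /\ 0 + n%:R^-1 * n%:R = 1 :> R.
Proof.
move=> n0; have N0 : 0 < n%:R :> R by rewrite ltr0n.
by split => //; split; [rewrite invr_gt0|rewrite add0r mulVf // gt_eqF].
Qed.

Lemma valid1 (R : realType) n : valid_graph (GR1 R n) /\ valid_graph (GM1 R n).
Proof. by split; apply: valid_Wu => n0; [exact: ab2|exact: ab1]. Qed.

Lemma valid2 (R : realType) n : valid_graph (GR2 R n) /\ valid_graph (GM2 R n).
Proof. by split; apply: valid_Wu => n0; [exact: ab1|exact: ab2]. Qed.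

Lemma sumPZ (R : realType) n (WR WM : 'M[R]_n) r S (c : R) (g : {set 'I_n} -> R) :
  \sum_T trans_prob WR WM r S T * (g T * c) = (\sum_T trans_prob WR WM r S T * g T) * c.
Proof. by rewrite mulr_suml; apply: eq_bigr => T _; rewrite mulrA. Qed.

Lemma B1_le0 (R : realType) (r N : R) : 0 < N -> 4 * r <= N ->
  (4 - 1) * r * (N ^+ 2)^-1 + (4^-1 - 1) * N^-1 <= 0.
Proof.
move=> N0 H.
have -> : (4 - 1) * r * (N ^+ 2)^-1 + (4^-1 - 1) * N^-1 = (3 / 4) * (4 * r - N) / N ^+ 2.
  by field; rewrite gt_eqF.
apply: mulr_le0_ge0; last by rewrite invr_ge0 exprn_ge0 // ltW.
by apply: mulr_ge0_le0; [lra|lra].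
Qed.

Lemma part1_bound (R : realType) n (r : R) i : 0 < r -> (0 < n)%N -> 4 * r <= n%:R ->
  fixation_from (GR1 R n) (GM1 R n) r [set i] <= 4 / 4 ^+ n.
Proof.
move=> r0 n0 Hn.
have [vR vM] := valid1 R n.
have N0 : 0 < n%:R :> R by rewrite ltr0n.
suff : fixation_from (GR1 R n) (GM1 R n) r [set i] <= 4 ^+ #|[set i]| / 4 ^+ n.
  by rewrite cards1 expr1.
apply: (UB vR vM r0 n0 (phi := fun S => 4 ^+ #|S| / 4 ^+ n)).
- by move=> S; rewrite divr_ge0 ?exprn_ge0.
- by rewrite cardsT card_ord divff // gt_eqF // exprn_gt0.
move=> S; rewrite sumPZ /GR1 /GM1.
have [a0 [b0 ab]] := ab1 R n0; have [a0' [b0' ab']] := ab2 R n0.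
have x4 : (4 : R) != 0 by rewrite pnatr_eq0.
rewrite (GE S r0 n0 x4 ab' ab).
apply: ler_wpM2r; first by rewrite invr_ge0 exprn_ge0.
rewrite -[X in _ <= X]mulr1; apply: ler_wpM2l; first exact: exprn_ge0.
rewrite gerDl; apply: mulr_le0_ge0; last by rewrite invr_ge0 ltW // F_pos.
apply: mulr_ge0_le0; first by rewrite mulr_ge0 ?ler0n.
exact: (B1_le0 N0 Hn).
Qed.

Lemma B2_eq0 (R : realType) (r N : R) : r != 0 -> N != 0 ->
  ((r * N)^-1 - 1) * r * N^-1 + (((r * N)^-1)^-1 - 1) * (N ^+ 2)^-1 = 0.
Proof. by move=> r0 N0; field; rewrite r0 N0. Qed.

Lemma B3 (R : realType) (r N : R) : 0 < r -> 1 <= N -> 2 < r * N ->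
  (2^-1 - 1) * r * N^-1 + ((2^-1)^-1 - 1) * (N ^+ 2)^-1 < 0 /\
  -1 <= ((2^-1 - 1) * r * N^-1 + ((2^-1)^-1 - 1) * (N ^+ 2)^-1) / ((r + 1) * N).
Proof.
move=> r0 N1 rN.
have N0 : 0 < N by lra.
have -> : (2^-1 - 1) * r * N^-1 + ((2^-1)^-1 - 1) * (N ^+ 2)^-1 = (2 - r * N) / (2 * N ^+ 2).
  by field; rewrite gt_eqF.
have D0 : 0 < 2 * N ^+ 2 by rewrite mulr_gt0 ?exprn_gt0.
split; first by rewrite pmulr_llt0 ?invr_gt0 //; lra.
have G0 : 0 < (r + 1) * N by rewrite mulr_gt0 //; lra.
rewrite ler_pdivlMr // ler_pdivlMr // expr2.
have h1 : 1 <= N * N by nra.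
have h2 : N <= N * N * N by nra.
nra.
Qed.

Lemma B4 (R : realType) (km B F G : R) : B <= 0 -> 1 <= km -> 0 < F -> F <= G ->
  km * B / F <= B / G.
Proof.
move=> B0 k1 F0 FG.
have G0 : 0 < G by apply: lt_le_trans FG.
apply: le_trans (_ : B / F <= _).
  by rewrite ler_pM2r ?invr_gt0 //; nra.
have : G^-1 <= F^-1 by rewrite lef_pV2.
by move=> H; rewrite -subr_ge0 -mulrBr; apply: mulr_le0 => //; rewrite subr_le0.
Qed.

Lemma part2_bound (R : realType) n (r : R) i : 0 < r -> (0 < n)%N -> 2 < r * n%:R ->
  1 - (r * n%:R)^-1 - n%:R^-1 <= fixation_from (GR2 R n) (GM2 R n) r [set i].
Proof.
move=> r0 n0 rN.
have [vR vM] := valid2 R n.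
have N1 : 1 <= n%:R :> R by rewrite ler1n.
have N0 : 0 < n%:R :> R by rewrite ltr0n.
have [a0 [b0 ab]] := ab1 R n0; have [a0' [b0' ab']] := ab2 R n0.
have [Bneg Bge] := B3 r0 N1 rN.
set B := (2^-1 - 1) * r * n%:R^-1 + ((2^-1)^-1 - 1) * (n%:R ^+ 2)^-1 in Bneg Bge.
have x0 : (r * n%:R)^-1 != 0 by rewrite invr_eq0 gt_eqF // mulr_gt0.
have h0 : (2^-1 : R) != 0 by rewrite invr_eq0 pnatr_eq0.
suff : 1 - ((r * n%:R)^-1) ^+ #|[set i]| - n%:R^-1 <= fixation_from (GR2 R n) (GM2 R n) r [set i].
  by rewrite cards1 expr1.
apply: (LBfix vR vM r0 n0 (phi := fun S => ((r * n%:R)^-1) ^+ #|S|)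
  (psi := fun S => (2^-1) ^+ #|S| * 2 ^+ n) (lam := 1 + B / ((r + 1) * n%:R))).
- by move=> S; rewrite exprn_ge0 // invr_ge0 ltW // mulr_gt0.
- by rewrite cards0 expr0.
- move=> S; rewrite /GR2 /GM2 (GE S r0 n0 x0 ab ab').
  rewrite B2_eq0 ?gt_eqF // mulr0 mul0r addr0 mulr1 //.
- by move=> S; rewrite mulr_ge0 ?exprn_ge0 // invr_ge0.
- move=> S _.
  apply: le_trans (_ : (2^-1) ^+ n * 2 ^+ n <= _).
    by rewrite -exprMn mulVf ?expr1n // pnatr_eq0.
  apply: ler_wpM2r; first by rewrite exprn_ge0.
  apply: ler_wiXn2l; first by rewrite invr_ge0.
    by rewrite invf_le1 // ler1n.
  by move: (max_card S); rewrite card_ord.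
- by move: Bge; set z := B / _ => Bz; lra.
- by rewrite gtrDl pmulr_llt0 // invr_gt0 mulr_gt0 //; lra.
- move=> S S0 ST.
  rewrite sumPZ /GR2 /GM2 (GE S r0 n0 h0 ab ab').
  rewrite [X in _ <= X]mulrCA mulrA.
  apply: ler_wpM2r; first by rewrite exprn_ge0.
  apply: ler_wpM2l; first by rewrite exprn_ge0 // invr_ge0.
  rewrite lerD2l -/B.
  have Hk : (1 <= #|S|)%N by rewrite card_gt0.
  have Hkm : (#|S| + #|~: S| = n)%N by rewrite cardsC card_ord.
  have Hm : (1 <= #|~: S|)%N.
    have : (#|S| < #|[set: 'I_n]%SET|)%N by apply: proper_card; rewrite properT.
    rewrite cardsT card_ord => H; rewrite lt0n; apply/eqP => E.
    by move: Hkm; rewrite E addn0 => Hn; move: H; rewrite Hn ltnn.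
  apply: B4; first exact: ltW.
  - by rewrite -natrM ler1n muln_gt0 Hk.
  - exact: F_pos.
  - rewrite total_fitnessE mulrDl mul1r; apply: lerD.
      by rewrite ler_pM2l // ler_nat; apply: leq_trans (leq_addr _ _) (eq_leq Hkm).
    by rewrite ler_nat; apply: leq_trans (leq_addl _ _) (eq_leq Hkm).
- by rewrite invr_gt0.
Qed.

Lemma fp_bounds (R : realType) n (WR WM : 'M[R]_n) r (lo hi : R) : (0 < n)%N ->
  (forall i, lo <= fixation_from WR WM r [set i] <= hi) ->
  lo <= fixation_prob WR WM r <= hi.
Proof.
move=> n0 H; have N0 : n%:R != 0 :> R by rewrite pnatr_eq0 -lt0n.
rewrite /fixation_prob; apply/andP; split.
  rewrite -[X in X <= _](mulKf N0) ler_wpM2l ?invr_ge0 ?ler0n //.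
  have -> : n%:R * lo = \sum_(i < n) lo by rewrite sumr_const card_ord mulr_natl.
  by apply: ler_sum => i _; case/andP: (H i).
rewrite -[X in _ <= X](mulKf N0) ler_wpM2l ?invr_ge0 ?ler0n //.
have -> : n%:R * hi = \sum_(i < n) hi by rewrite sumr_const card_ord mulr_natl.
by apply: ler_sum => i _; case/andP: (H i).
Qed.

Lemma aux4 (R : realType) (eps p : R) : 0 < p -> 4 <= eps * p -> 4 / (p * p) <= eps * p^-1.
Proof.
move=> p0 H; rewrite invfM mulrA ler_pM2r ?invr_gt0 //.
by rewrite ler_pdivrMr.
Qed.

Lemma aux_inv (R : realType) (r N : R) : r != 0 -> N != 0 ->
  1 - (r * N)^-1 - N^-1 = 1 - (r^-1 + 1) / N.
Proof. by move=> r0 N0; field; rewrite r0 N0. Qed.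

Unset Implicit Arguments.
Local Open Scope classical_set_scope.

Theorem theorem5 (R : realType) :
  (exists (GR GM : forall n : nat, 'M[R]_n),
      (forall n, valid_graph (GR n) /\ valid_graph (GM n)) /\
      (forall r : R, 0 < r ->
         exists a : R, 1 < a /\
           (forall eps : R, 0 < eps ->
              \forall n \near \oo,
                `|fixation_prob (GR n) (GM n) r| <= eps * `|a ^- n|)))
  /\
  (exists (GR' GM' : forall n : nat, 'M[R]_n),
      (forall n, valid_graph (GR' n) /\ valid_graph (GM' n)) /\
      (forall r : R, 0 < r ->
         exists C : R,
           \forall n \near \oo,
             1 - C / n%:R <= fixation_prob (GR' n) (GM' n) r)).
Proof.
split.
  exists (GR1 R), (GM1 R); split; first exact: valid1.
  move=> r r0; exists 2; split; first by rewrite ltr1n.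
  move=> eps e0.
  have h1 : 4 * r < (Num.Def.archi_bound (4 * r))%:R.
    by apply: archi_boundP; rewrite mulr_ge0 // ltW.
  have h2 : 4 / eps < (Num.Def.archi_bound (4 / eps))%:R.
    by apply: archi_boundP; rewrite divr_ge0 // ltW.
  set N1 := Num.Def.archi_bound _ in h1; set N2 := Num.Def.archi_bound _ in h2.
  exists (maxn 1 (maxn N1 N2)) => // n /= Hn.
  have n0 : (0 < n)%N by apply: leq_trans Hn; rewrite leq_maxl.
  have Hn1 : (N1 <= n)%N by apply: leq_trans Hn; rewrite (leq_trans (leq_maxl N1 N2)) ?leq_maxr.
  have Hn2 : (N2 <= n)%N by apply: leq_trans Hn; rewrite (leq_trans (leq_maxr N1 N2)) ?leq_maxr.
  have [vR vM] := valid1 R n.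
  have /andP[F0 F1] : 0 <= fixation_prob (GR1 R n) (GM1 R n) r <= 4 / 4 ^+ n.
    apply: fp_bounds => // i; apply/andP; split.
      exact: le_trans (full_ge0 vR vM r0 n0 0 [set i]) (fix_ge vR vM r0 n0 0 [set i]).
    apply: part1_bound => //; apply: ltW; apply: lt_le_trans h1 _.
    by rewrite ler_nat.
  rewrite ger0_norm // ger0_norm ?invr_ge0 ?exprn_ge0 //.
  apply: le_trans F1 _.
  have -> : (4 : R) ^+ n = 2 ^+ n * 2 ^+ n by rewrite -exprMn -natrM.
  apply: aux4; first by rewrite exprn_gt0.
  rewrite mulrC -ler_pdivrMr //.
  apply: ltW; apply: lt_le_trans h2 _.
  apply: le_trans (_ : n%:R <= _); first by rewrite ler_nat.
  by rewrite -natrX ler_nat ltnW // ltn_expl.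
exists (GR2 R), (GM2 R); split; first exact: valid2.
move=> r r0; exists (r^-1 + 1).
have h2 : 2 / r < (Num.Def.archi_bound (2 / r))%:R.
  by apply: archi_boundP; rewrite divr_ge0 // ltW.
set N2 := Num.Def.archi_bound _ in h2.
exists (maxn 1 N2) => // n /= Hn.
have n0 : (0 < n)%N by apply: leq_trans Hn; rewrite leq_maxl.
have Hn2 : (N2 <= n)%N by apply: leq_trans Hn; rewrite leq_maxr.
have rN : 2 < r * n%:R.
  rewrite mulrC -ltr_pdivrMr //; apply: lt_le_trans h2 _; by rewrite ler_nat.
have /andP[F0 _] : 1 - (r^-1 + 1) / n%:R <= fixation_prob (GR2 R n) (GM2 R n) r <= 1.
  apply: fp_bounds => // i; apply/andP; split.
    rewrite -aux_inv ?gt_eqF ?ltr0n //; exact: part2_bound.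
  have [vR vM] := valid2 R n.
  by apply: (UB vR vM r0 n0 (phi := fun _ => 1)) => // S; rewrite stoch.
exact: F0.
Qed.
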